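(* Let $q$ be a prime power, $k \ge 2$, $n = (q^k-1)/(q-1)$, and let $\mathcal{C} \subseteq \mathbb{F}_q^n$ be the $q$-ary simplex code of dimension $k$. Then $$\mathbb{E}[\mathcal{C}] = k + \sum_{i=1}^{k} \frac{q^{i-1}-1}{q^k - q^{i-1}}.$$
   Context: The $q$-ary simplex code of dimension $k$ is the code generated by a $k \times n$ matrix whose columns are representatives of all nonzero vectors of $\mathbb{F}_q^k$ up to nonzero scalar multiples, one per class (so $n=(q^k-1)/(q-1)$). For a linear code $\mathcal{C}\subseteq\mathbb{F}_q^n$ of dimension $k$, $\mathbb{E}[\mathcal{C}]$ is defined as $\mathbb{E}[G]$ for any generator matrix $G\in\mathbb{F}_q^{k\times n}$ of $\mathcal{C}$ (this does not depend on the choice of $G$), where $\mathbb{E}[G]$ is the expected number of draws when columns of $G$ are drawn independently and uniformly at random from its $n$ columns (with repetition) until the drawn columns span $\mathbb{F}_q^k$. *)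

(* Defs.v *)
From HB Require Import structures.
From mathcomp Require Import all_boot all_order all_algebra.
From mathcomp Require Import all_classical all_reals all_analysis.
Set Implicit Arguments. Unset Strict Implicit. Unset Printing Implicit Defensive.
Import Order.TTheory GRing.Theory Num.Theory.
Local Open Scope ring_scope.

Definition spans_seq (F : fieldType) (k n : nat) (G : 'M[F]_(k, n))
  (s : seq 'I_n) : bool :=
  \rank (\sum_(j <- s) <<row j G^T>>)%MS == k.

Definition first_spans_at (F : fieldType) (k n t : nat) (G : 'M[F]_(k, n))
  (f : t.-tuple 'I_n) : bool :=
  spans_seq G f && [forall s : 'I_t, ~~ spans_seq G (take s f)].

(* P(T = t) where T is the number of uniform independent draws (with
   repetition) from the n columns until they span F^k. *)
Definition hit_prob (R : realType) (F : finFieldType) (k n t : nat)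
  (G : 'M[F]_(k, n)) : R :=
  (#|[set f : t.-tuple 'I_n | first_spans_at G f]|)%:R / (n ^ t)%:R.

(* G is a generator matrix of the q-ary simplex code of dimension k:
   its columns are nonzero and form a system of representatives of the
   nonzero vectors of F^k up to nonzero scalar multiples (one per class). *)
Definition simplex_generator (F : fieldType) (k n : nat) (G : 'M[F]_(k, n))
  : Prop :=
  (forall j : 'I_n, col j G != 0) /\
  (forall v : 'cV[F]_k, v != 0 ->
     exists! j : 'I_n, exists a : F, a != 0 /\ col j G = a *: v).

(* Main.v *)
Require Import Defs.
From HB Require Import structures.
From mathcomp Require Import all_boot all_order all_algebra all_fingroup.
From mathcomp Require Import all_classical all_reals all_analysis.
From mathcomp Require Import mxabelem.
From mathcomp Require Import ring lra zify.
Import Order.TTheory GRing.Theory Num.Theory.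
Import numFieldNormedType.Exports.
Set Implicit Arguments. Unset Strict Implicit. Unset Printing Implicit Defensive.
Local Open Scope ring_scope.
Section Comb.
Variables (F : finFieldType) (k n : nat) (G : 'M[F]_(k, n)).
Hypothesis hG : simplex_generator G.

Definition rw (j : 'I_n) : 'rV[F]_k := row j G^T.
Definition cnt (A : 'M[F]_k) := #|[set j : 'I_n | (rw j <= A)%MS]|.

Lemma rw_neq0 j : rw j != 0.
Proof.
case: hG => h _; rewrite /rw -tr_col; apply: contra (h j) => /eqP H.
by rewrite -[col j G]trmxK H trmx0.
Qed.

Lemma cnt_eq (A : 'M[F]_k) : (cnt A * (#|F| - 1) = #|F| ^ \rank A - 1)%N.
Proof.
case: hG => hnz huniq.
set J := [set j : 'I_n | (rw j <= A)%MS].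
set U := [set a : F | a != 0].
have cU : #|U| = (#|F| - 1)%N.
  by rewrite (_ : U = [set~ 0]) ?cardsC1 ?subn1 //; apply/setP => a; rewrite !inE.
set V := [set v : 'rV[F]_k | (v <= A)%MS & v != 0].
have cV : #|V| = (#|F| ^ \rank A - 1)%N.
  rewrite -card_rowg (cardsD1 0 (rowg A)) inE sub0mx add1n subn1 /=.
  by apply: eq_card => v; rewrite !inE andbC.
pose f (p : 'I_n * F) := p.2 *: rw p.1.
have uq : forall j j' (a : F), a != 0 -> rw j' = a *: rw j -> j' = j.
  move=> j j' a a0 e.
  have v0 : (rw j)^T != 0 by rewrite trmx_eq0 rw_neq0.
  have [j0 [_ H]] := huniq _ v0.
  have -> : j = j0 by apply/esym/H; exists 1; rewrite oner_eq0 scale1r /rw -tr_col trmxK.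
  apply/esym/H; exists a; split => //.
  by rewrite -[col j' G]trmxK tr_col -/(rw j') e linearZ.
rewrite /cnt -/J -cU -cardsX -cV.
rewrite -(@card_in_imset _ _ f).
  apply: eq_card => v; apply/imsetP/idP.
    case=> [[j a]]; rewrite !inE /= => /andP [Jj Ua] ->; rewrite /f /=.
    by rewrite scalemx_sub // scaler_eq0 negb_or Ua rw_neq0.
  rewrite inE => /andP [vA v0].
  have vt0 : v^T != 0 by rewrite trmx_eq0.
  have [j [[a [a0 e]] _]] := huniq _ vt0.
  have ej : rw j = a *: v by rewrite /rw -tr_col e linearZ /= trmxK.
  exists (j, a^-1); rewrite ?inE /= ?invr_eq0 ?a0 ?andbT.
    by rewrite ej scalemx_sub.
  by rewrite /f /= ej scalerA mulVf ?scale1r.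
move=> [j a] [j' b]; rewrite !inE /= => /andP [_ a0] /andP [_ b0]; rewrite /f /= => e.
have e' : rw j' = (a / b) *: rw j by rewrite mulrC -scalerA e scalerA mulVf // scale1r.
have ejj : j' = j by apply: (uq _ _ (a / b)) e'; rewrite mulf_neq0 ?invr_eq0.
subst j'.
have := rw_neq0 j; move/eqP: e; rewrite -subr_eq0 -scalerBl scaler_eq0 subr_eq0.
by case/orP => [/eqP -> | ->].
Qed.

Definition sp (s : seq 'I_n) : 'M[F]_k := (\sum_(j <- s) <<rw j>>)%MS.
Definition dm s := \rank (sp s).

Lemma spansE s : spans_seq G s = (dm s == k).
Proof. by []. Qed.

Lemma sp_rcons s j : sp (rcons s j) = (sp s + <<rw j>>)%MS.
Proof. by rewrite /sp big_rcons. Qed.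

Lemma dm_le s : (dm s <= k)%N.
Proof. exact: rank_leq_col. Qed.

Lemma dm_nil : dm [::] = 0%N.
Proof. by rewrite /dm /sp big_nil mxrank0. Qed.

Lemma dm_rcons s j : dm (rcons s j) = (dm s + ~~ (rw j <= sp s)%MS)%N.
Proof.
rewrite /dm sp_rcons; case: (boolP (rw j <= sp s)%MS) => h /=.
  rewrite addn0; apply: eqmx_rank; apply/eqmxP/addsmx_idPl; by rewrite genmxE.
apply/eqP; rewrite eqn_leq; apply/andP; split.
  apply: leq_trans (mxrank_adds_leqif (sp s) <<rw j>>%MS).1 _.
  by rewrite mxrank_gen rank_rV rw_neq0 leqnn.
rewrite addn1; apply: rank_ltmx; rewrite /ltmx addsmxSl /=.
apply: contra h => h; apply: submx_trans h.
by rewrite -(genmxE (rw j)) addsmxSr.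
Qed.

Lemma dm_take s i : (dm (take i s) <= dm s)%N.
Proof.
rewrite /dm; apply: mxrankS.
by rewrite -{2}(cat_take_drop i s) /sp big_cat /= addsmxSl.
Qed.

Lemma fs_rcons t (g : t.-tuple 'I_n) j :
  first_spans_at G [tuple of rcons g j] = (dm (rcons g j) == k) && (dm g < k)%N.
Proof.
rewrite /first_spans_at spansE; congr andb.
apply/forallP/idP => [h | h s].
  have := h ord_max; rewrite spansE /= -cats1 takel_cat ?size_tuple // take_oversize ?size_tuple //.
  by move=> H; rewrite ltn_neqAle H dm_le.
have hs : (s <= size g)%N by rewrite size_tuple -ltnS ltn_ord.
rewrite spansE /= -cats1 takel_cat //.
by rewrite neq_ltn (leq_ltn_trans (dm_take _ _) h).
Qed.

End Comb.

Lemma sum_rcons (R : nmodType) (T : finType) t (h : t.+1.-tuple T -> R) :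
  \sum_(f : t.+1.-tuple T) h f = \sum_(g : t.-tuple T) \sum_(j : T) h [tuple of rcons g j].
Proof.
rewrite pair_big /=.
have bij : bijective (fun p : t.-tuple T * T => [tuple of rcons p.1 p.2]).
  apply: inj_card_bij.
    move=> [g j] [g' j'] /(congr1 val) /= /eqP; rewrite eqseq_rcons => /andP [/eqP e /eqP ->].
    by congr pair; apply: val_inj.
  by rewrite card_prod !card_tuple expnS mulnC.
by rewrite (reindex _ (onW_bij _ bij)).
Qed.


Lemma cardR (R : nzSemiRingType) (T : finType) (P : pred T) :
  (#|[set x | P x]|%:R : R) = \sum_x (P x)%:R.
Proof.
rewrite -sum1_card natr_sum big_mkcond /=; apply: eq_bigr => x _.
by rewrite inE; case: (P x).
Qed.

Lemma sum_tuple0 (R : nmodType) (T : finType) (h : 0.-tuple T -> R) :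
  \sum_(f : 0.-tuple T) h f = h [tuple].
Proof.
rewrite (eq_bigr (fun=> h [tuple])); last by move=> f _; rewrite tuple0.
by rewrite sumr_const card_tuple expn0.
Qed.

Lemma field_id (R : realFieldType) (N C x : R) (d k : nat) :
  1 < x -> (d < k)%N -> N * (x - 1) = x ^+ k - 1 -> C * (x - 1) = x ^+ d - 1 ->
  (N - C) * ((x ^+ k - 1) / (x ^+ k - x ^+ d)) = N.
Proof.
move=> x1 dk hN hC.
have lt : x ^+ d < x ^+ k by rewrite ltr_eXn2l.
have h : (N - C) * (x - 1) = x ^+ k - x ^+ d by rewrite mulrBl hN hC; ring.
have x10 : x - 1 != 0 by rewrite subr_eq0 gt_eqF.
have d0 : x ^+ k - x ^+ d != 0 by rewrite subr_eq0 gt_eqF.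
rewrite -h -hN; field.
rewrite x10 /=; rewrite -h in d0; apply: contra d0 => /eqP ->; by rewrite mul0r.
Qed.

Section Real.
Variables (R : realFieldType) (F : finFieldType) (k n : nat) (G : 'M[F]_(k, n)).
Hypothesis hG : simplex_generator G.

Definition Dl (d : nat) : R := (#|F|%:R ^+ k - 1) / (#|F|%:R ^+ k - #|F|%:R ^+ d).
Definition phi (d : nat) : R := \sum_(d <= i < k) Dl i.

Lemma q1 : 1 < (#|F|%:R : R).
Proof. by rewrite ltr1n card_finNzRing_gt1. Qed.

Lemma cntR (A : 'M[F]_k) : (cnt G A)%:R * (#|F|%:R - 1) = #|F|%:R ^+ \rank A - 1 :> R.
Proof.
have q0 : (1 <= #|F|)%N by apply: ltnW; exact: card_finNzRing_gt1.
have := cnt_eq hG A => /(congr1 (fun m => m%:R : R)).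
by rewrite natrM !natrB ?expn_gt0 ?q0 // natrX.
Qed.

Lemma nR : n%:R * (#|F|%:R - 1) = #|F|%:R ^+ k - 1 :> R.
Proof.
have := cntR 1%:M; rewrite mxrank1 /cnt.
rewrite (_ : [set j | _] = [set: 'I_n]) ?cardsT ?card_ord //.
by apply/setP => j; rewrite !inE submx1.
Qed.

Lemma phi_k : phi k = 0.
Proof. by rewrite /phi big_geq. Qed.

Lemma phiS d : (d < k)%N -> phi d = Dl d + phi d.+1.
Proof. by move=> h; rewrite /phi big_ltn. Qed.

Lemma step (g : seq 'I_n) :
  \sum_(j < n) phi (dm G (rcons g j)) = n%:R * phi (dm G g) - n%:R * (dm G g < k)%:R.
Proof.
have := dm_le G g; rewrite leq_eqVlt => /orP [/eqP e | lt].
  rewrite e ltnn mulr0 subr0.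
  rewrite (eq_bigr (fun => phi k)); first by rewrite sumr_const card_ord phi_k mul0rn mulr0.
  move=> j _; rewrite (dm_rcons hG) e.
  have -> : (rw G j <= sp G g)%MS by apply: submx_full; rewrite /row_full -/(dm G g) e.
  by rewrite addn0.
rewrite lt mulr1.
rewrite (eq_bigr (fun j => phi (dm G g) - (~~ (rw G j <= sp G g)%MS)%:R * Dl (dm G g))); last first.
  move=> j _; rewrite (dm_rcons hG); case: (rw G j <= sp G g)%MS => /=.
    by rewrite addn0 mul0r subr0.
  by rewrite addn1 mul1r (phiS lt) addrC addKr.
rewrite sumrB sumr_const card_ord -mulr_suml.
rewrite (eq_bigr (fun j => 1 - ((rw G j <= sp G g)%MS)%:R)); last by move=> j _; case: (rw G j <= sp G g)%MS => /=; rewrite ?subr0 ?subrr.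
rewrite sumrB sumr_const card_ord -cardR -/(cnt G (sp G g)) mulr_natl.
rewrite (field_id q1 lt nR (cntR _)); ring.
Qed.

End Real.

Section Agg.
Variables (R : realFieldType) (F : finFieldType) (k n : nat) (G : 'M[F]_(k, n)).
Hypothesis hG : simplex_generator G.

Lemma sum_phi t :
  \sum_(f : t.+1.-tuple 'I_n) @phi R F k (dm G f) =
  n%:R * \sum_(g : t.-tuple 'I_n) @phi R F k (dm G g) -
  n%:R * \sum_(g : t.-tuple 'I_n) ((dm G g < k)%N)%:R.
Proof.
rewrite sum_rcons !mulr_sumr -sumrB. apply: eq_bigr => g _.
exact: (@step R F k n G hG g).
Qed.

Lemma sum_fs t :
  \sum_(f : t.+1.-tuple 'I_n) (first_spans_at G f)%:R +
  \sum_(f : t.+1.-tuple 'I_n) ((dm G f < k)%N)%:R =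
  n%:R * \sum_(g : t.-tuple 'I_n) ((dm G g < k)%N)%:R :> R.
Proof.
rewrite !sum_rcons -big_split mulr_sumr; apply: eq_bigr => g _.
rewrite -big_split /=.
rewrite (_ : n%:R * _ = \sum_(j < n) ((dm G g < k)%N)%:R); last by rewrite sumr_const card_ord mulr_natl.
apply: eq_bigr => j _; rewrite fs_rcons.
have h3 := dm_le G (rcons g j); have h2 := dm_le G g.
rewrite (dm_rcons hG) in h3 *.
have [h1|h1] := ltnP (dm G g) k; rewrite /=.
  rewrite andbT; move: h3; set m := (_ + _)%N; rewrite leq_eqVlt => /orP [/eqP ->|lt].
    by rewrite eqxx ltnn addr0.
  by rewrite lt (ltn_eqF lt) add0r.
have e : dm G g = k by apply/eqP; rewrite eqn_leq h2 h1.
by rewrite andbF add0r e ltnNge leq_addr.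
Qed.

End Agg.

Lemma half_bounds N : (N <= 2 * (N - N./2))%N /\ (N.+1 <= 2 * (N./2).+1)%N.
Proof. have := odd_double_half N. rewrite -muln2. case: (odd N) => /=; lia. Qed.

Import Order.TTheory GRing.Theory Num.Theory.
Import numFieldNormedType.Exports.
Set Implicit Arguments. Unset Strict Implicit. Unset Printing Implicit Defensive.
Local Open Scope classical_set_scope.
Local Open Scope ring_scope.

Lemma abstract_cvg (R : realType) (H Q W : nat -> R) (P : R) :
  H 0%N = 0 -> (forall t, H t.+1 = Q t - Q t.+1) -> (forall t, 0 <= H t) ->
  (forall t, 0 <= Q t) ->
  W 0%N = P -> (forall t, W t.+1 = W t - Q t) -> (forall t, 0 <= W t) ->
  (forall t, W t <= P * Q t) ->
  ((fun N : nat => \sum_(t < N) (t%:R * H t)) : R^nat) @ \oo --> P.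
Proof.
move=> H0 HS Hge0 Qge0 W0 WS Wge0 WQ.
have Qdec : forall t, Q t.+1 <= Q t by move=> t; have := Hge0 t.+1; rewrite HS subr_ge0.
have Qmon : forall s t, (s <= t)%N -> Q t <= Q s.
  move=> s t /subnK <-; elim: (t - s)%N => [|m IH] //=; rewrite addSn.
  exact: le_trans (Qdec _) IH.
have P0 : 0 <= P by rewrite -W0.
have SE : forall N, \sum_(t < N.+1) (t%:R * H t) = \sum_(s < N) Q s - N%:R * Q N.
  elim=> [|N IH]; first by rewrite big_ord_recr big_ord0 /= H0 !mulr0 big_ord0 mul0r subr0 add0r.
  rewrite big_ord_recr /= IH HS big_ord_recr /= -natr1; lra.
have QE : forall N, \sum_(s < N) Q s = P - W N.
  elim=> [|N IH]; first by rewrite big_ord0 W0 subrr.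
  by rewrite big_ord_recr /= IH WS; lra.
have QI : forall M N, (M <= N)%N -> (N - M)%:R * Q N <= W M - W N.
  move=> M N /subnK <-; rewrite addnK.
  elim: (N - M)%N => [|m IH]; first by rewrite mul0r subrr.
  rewrite addSn WS -natr1.
  have := ler_wpM2l (ler0n R m) (Qdec (m + M)%N).
  move=> h; have := Qdec (m + M)%N; rewrite mulrDl mul1r; lra.
have L1 : forall N, N.+1%:R * Q N <= P.
  move=> N; have : \sum_(s < N.+1) Q N <= \sum_(s < N.+1) Q s.
    by apply: ler_sum => i _; apply: Qmon; rewrite -ltnS.
  rewrite sumr_const card_ord QE -mulr_natl; have := Wge0 N.+1; lra.
have L2 : forall N, N.+1%:R * W N <= P * P.
  move=> N; have := ler_wpM2l (ler0n R N.+1) (WQ N).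
  have := ler_wpM2l P0 (L1 N); rewrite mulrCA; lra.
have L3 : forall N, N.+1%:R * (N%:R * Q N) <= 4%:R * (P * P).
  move=> N; have [h1 h2] := half_bounds N.
  have hh : (N./2 <= N)%N by have := odd_double_half N; rewrite -muln2; lia.
  have a : N%:R * Q N <= 2%:R * W N./2.
    have := QI N./2 N hh; have := Wge0 N.
    have : N%:R * Q N <= (2 * (N - N./2))%:R * Q N by apply: ler_wpM2r => //; rewrite ler_nat.
    rewrite natrM natrB // -mulrA; lra.
  have b : N.+1%:R <= (2 * (N./2).+1)%:R :> R by rewrite ler_nat.
  rewrite natrM in b.
  have c0 : 0 <= N%:R * Q N by apply: mulr_ge0.
  apply: le_trans (ler_pM (ler0n _ _) c0 b a) _.
  have := L2 N./2; rewrite mulrACA; lra.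
have eE : forall N, \sum_(t < N.+1) (t%:R * H t) = P - (W N + N%:R * Q N).
  by move=> N; rewrite SE QE; lra.
rewrite -cvg_shiftS /=.
apply: (@squeeze_cvgr _ _ _ _ (fun N => P - 5%:R * (P * P) * harmonic N) (fun=> P)).
- near=> N; rewrite eE; apply/andP; split; last first.
    by have := Wge0 N; have := mulr_ge0 (ler0n R N) (Qge0 N); lra.
  rewrite lerB // /harmonic /= ler_pdivlMr ?ltr0n // mulrC.
  have := L2 N; have := L3 N; rewrite mulrDr; lra.
- suff : (fun N => P - 5%:R * (P * P) * harmonic N) @ \oo --> P - 5%:R * (P * P) * 0.
    by rewrite mulr0 subr0.
  by apply: cvgB; [exact: cvg_cst | apply: cvgMr; exact: cvg_harmonic].
- exact: cvg_cst.
Unshelve. all: by end_near.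
Qed.

Local Open Scope classical_set_scope.

Theorem mainTheorem2 (R : realType) (F : finFieldType) (q k : nat)
  (hq : #|F| = q) (hk : (2 <= k)%N)
  (G : 'M[F]_(k, (q ^ k - 1) %/ (q - 1)))
  (hG : simplex_generator G) :
  ((fun N : nat => \sum_(t < N) (t%:R * hit_prob R t G)) : R^nat) @ \oo -->
    (k%:R + \sum_(1 <= i < k.+1)
       ((q%:R ^+ (i - 1) - 1) / (q%:R ^+ k - q%:R ^+ (i - 1))) : R).
Proof.
subst q.
move: G hG; set n := ((#|F| ^ k - 1) %/ (#|F| - 1))%N => G hG.
have k0 : (0 < k)%N by apply: leq_trans hk.
have nRe := @nR R F k n G hG.
have q1R := @q1 R F.
have n0 : n%:R != 0 :> R.
  apply/eqP => h; move: nRe; rewrite h mul0r => /eqP; rewrite eq_sym subr_eq0.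
  by rewrite gt_eqF // exprn_egt1 // -lt0n.
have n0' : forall t, (n ^ t)%:R != 0 :> R by move=> t; rewrite natrX expf_neq0.
have npos : forall t, 0 < (n ^ t)%:R :> R by move=> t; rewrite lt_def n0' ler0n.
set a := fun t => \sum_(f : t.-tuple 'I_n) ((first_spans_at G f)%:R : R).
set b := fun t => \sum_(f : t.-tuple 'I_n) (((dm G f < k)%N)%:R : R).
set w := fun t => \sum_(f : t.-tuple 'I_n) @phi R F k (dm G f).
pose P := @phi R F k 0.
have Dl_ge0 : forall i, (i < k)%N -> 0 <= @Dl R F k i.
  move=> i ik; rewrite /Dl divr_ge0 // subr_ge0.
    by rewrite exprn_ege1 // ltW.
  by rewrite ler_eXn2l // ltnW.
have phi_ge0 : forall d, 0 <= @phi R F k d.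
  move=> d; rewrite /phi big_nat_cond; apply: sumr_ge0 => i /andP [/andP [_ ik] _].
  exact: Dl_ge0.
have phi_le : forall d, (d <= k)%N -> @phi R F k d <= P * ((d < k)%N)%:R.
  move=> d dk; case: ltnP => h /=.
    rewrite mulr1 /P /phi (@big_cat_nat _ _ _ d 0 k) //=.
    apply: ler_wpDl; last exact: lexx.
    rewrite big_nat_cond; apply: sumr_ge0 => i /andP [/andP [_ ik] _].
    by apply: Dl_ge0; apply: leq_trans ik dk.
  have -> : d = k by apply/eqP; rewrite eqn_leq dk h.
  by rewrite phi_k mulr0.
have -> : (fun N : nat => \sum_(t < N) (t%:R * hit_prob R t G)) =
          (fun N : nat => \sum_(t < N) (t%:R * (a t / (n ^ t)%:R))).
  apply: funext => N; apply: eq_bigr => t _; congr (_ * _).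
  by rewrite /hit_prob cardR.
have -> : (k%:R + \sum_(1 <= i < k.+1)
       ((#|F|%:R ^+ (i - 1) - 1) / (#|F|%:R ^+ k - #|F|%:R ^+ (i - 1))) : R) = P.
  have Dl_split : forall i, (i < k)%N -> @Dl R F k i =
      1 + (#|F|%:R ^+ i - 1) / (#|F|%:R ^+ k - #|F|%:R ^+ i).
    move=> i ik; have d0 : #|F|%:R ^+ k - #|F|%:R ^+ i != 0 :> R.
      by rewrite subr_eq0 gt_eqF // ltr_eXn2l.
    rewrite /Dl (_ : #|F|%:R ^+ k - 1 = (#|F|%:R ^+ k - #|F|%:R ^+ i) + (#|F|%:R ^+ i - 1) :> R);
      last by ring.
    by rewrite mulrDl divff.
  rewrite big_add1 /=.
  under eq_bigr do rewrite subSS subn0.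
  rewrite /P /phi !big_mkord.
  rewrite [RHS](eq_bigr (fun i : 'I_k => 1 + (#|F|%:R ^+ i - 1) / (#|F|%:R ^+ k - #|F|%:R ^+ i))).
    by rewrite big_split /= sumr_const card_ord.
  by move=> i _; apply: Dl_split.
apply: (@abstract_cvg R (fun t => a t / (n ^ t)%:R) (fun t => b t / (n ^ t)%:R)
                        (fun t => w t / (n ^ t)%:R)).
- rewrite /a sum_tuple0 /first_spans_at spansE dm_nil eq_sym (gtn_eqF k0) /=.
  by rewrite mul0r.
- move=> t /=.
  have e : a t.+1 = n%:R * b t - b t.+1.
    by rewrite -(sum_fs R hG t); rewrite /a /b; ring.
  rewrite e expnS natrM; field.
  by apply/andP; split; [exact: n0' | exact: n0].
- by move=> t; apply: divr_ge0 => //; apply: sumr_ge0 => f _.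
- by move=> t; apply: divr_ge0 => //; apply: sumr_ge0 => f _.
- by rewrite /w /= sum_tuple0 dm_nil expn0 divr1.
- move=> t /=.
  rewrite /w (sum_phi R hG t) -/(w t) -/(b t) expnS natrM; field.
  by apply/andP; split; [exact: n0' | exact: n0].
- by move=> t; apply: divr_ge0 => //; apply: sumr_ge0 => f _.
- move=> t /=; rewrite mulrA ler_pM2r ?invr_gt0 //.
  rewrite /w /b mulr_sumr; apply: ler_sum => f _; apply: phi_le; exact: dm_le.
Qed.
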